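(* Let $w\ge 1$ and $n\ge 1$ be integers and let $C\le \mathbb{F}_2^n$ be a linear subspace spanned by vectors of Hamming weight at most $w$, such that $\bigcup_{\boldsymbol{c}\in C}\operatorname{supp}(\boldsymbol{c})=[n]$. Then for every $0\le\lambda\le 1$, \[ Q_C(\lambda)\le\left(\frac{(1+\lambda)^w}{1+\lambda^w}\right)^{n/w}. \] Moreover, if $w=3$ then $Q_C(\lambda)\le (1+3\lambda)^{n/3}$ for every $0\le\lambda\le1$, and if $w=4$ then $Q_C(\lambda)\le (1+4\lambda+6\lambda^2)^{n/4}$ for every $0\le\lambda\le 1$.
   Context: For a finite set $U$ and a linear subspace $C\le\mathbb{F}_2^U$, the weight $w_{\mathrm H}(A)$ of a coset $A\in\mathbb{F}_2^U/C$ is the minimum Hamming weight of a vector in $A$. The coset-weight generating function of $C$ is $Q_C(\lambda)=\sum_{A\in\mathbb{F}_2^U/C}\lambda^{w_{\mathrm H}(A)}$ (with the convention $0^0=1$). For $\boldsymbol{c}\in\mathbb{F}_2^n$, $\operatorname{supp}(\boldsymbol{c})=\{i\in[n]:c_i=1\}$, and $[n]=\{1,\dots,n\}$. *)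

(* Defs.v *)
From HB Require Import structures.
From mathcomp Require Import all_boot all_order all_algebra.
From mathcomp Require Import all_classical all_reals all_analysis.
Set Implicit Arguments. Unset Strict Implicit. Unset Printing Implicit Defensive.
Import Order.TTheory GRing.Theory Num.Theory.
Local Open Scope ring_scope.

Definition hweight (n : nat) (v : 'rV['F_2]_n) : nat := #|[set i | v 0 i != 0]|.

Definition vset (n : nat) (C : {vspace 'rV['F_2]_n}) : {set 'rV['F_2]_n} :=
  [set c | c \in C].

Definition cosets (n : nat) (C : {vspace 'rV['F_2]_n}) : {set {set 'rV['F_2]_n}} :=
  [set [set x + c | c in vset C] | x : 'rV['F_2]_n].

(* weight of a coset: minimum Hamming weight of its elements
   (cosets are nonempty and every weight is <= n, so the seed n is harmless) *)
Definition coset_weight (n : nat) (A : {set 'rV['F_2]_n}) : nat :=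
  \big[minn/n]_(v in A) hweight v.

(* coset-weight generating function Q_C(lambda); note lambda ^+ 0 = 1 *)
Definition QC (R : realType) (n : nat) (C : {vspace 'rV['F_2]_n}) (l : R) : R :=
  \sum_(A in cosets C) l ^+ coset_weight A.

(* Main.v *)
Require Import Defs.
From HB Require Import structures.
From mathcomp Require Import all_boot all_order all_algebra.
From mathcomp Require Import all_classical all_reals all_analysis.
From mathcomp Require Import ring lra zify.
From mathcomp Require Import all_boot all_order all_algebra.
Set Implicit Arguments. Unset Strict Implicit. Unset Printing Implicit Defensive.
Import Order.TTheory GRing.Theory Num.Theory.
Local Open Scope ring_scope.

Lemma F2_cases (a : 'F_2) : a = 0 \/ a = 1.
Proof. case: a => m Hm; case: m Hm => [|[|m]] Hm; [left|right|]; try exact/val_inj. by []. Qed.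

Lemma F2_addss (a : 'F_2) : a + a = 0.
Proof. by case: (F2_cases a) => ->; apply/eqP. Qed.

Lemma F2_nat (a : 'F_2) : ((a != 0) : nat)%:R = a.
Proof. by case: (F2_cases a) => ->; apply/eqP. Qed.

Lemma bigminn_le_seq (I : eqType) (r : seq I) (P : pred I) F m j :
  j \in r -> P j -> (\big[minn/m]_(i <- r | P i) F i <= F j)%N.
Proof.
elim: r => // i r IH; rewrite inE big_cons => /orP [/eqP <- -> | jr Pj].
  by rewrite geq_minl.
by case: (P i); rewrite ?geq_min IH ?orbT.
Qed.

Lemma bigminn_le (I : finType) (P : pred I) F m j :
  P j -> (\big[minn/m]_(i | P i) F i <= F j)%N.
Proof. by apply: bigminn_le_seq; rewrite mem_index_enum. Qed.

Section Vec.
Variable n : nat.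
Notation V := 'rV['F_2]_n.

Definition supp (v : V) : {set 'I_n} := [set i | v 0 i != 0].
Definition ind (S : {set 'I_n}) : V := \row_i ((i \in S) : nat)%:R.

Lemma addvv (v : V) : v + v = 0.
Proof. by apply/rowP => i; rewrite !mxE F2_addss. Qed.

Lemma addvK (u v : V) : u + v + v = u.
Proof. by rewrite -addrA addvv addr0. Qed.

Lemma suppD (u v : V) : supp (u + v) \subset supp u :|: supp v.
Proof.
apply/subsetP => i; rewrite !inE mxE.
case: (F2_cases (u 0 i)) => ->; case: (F2_cases (v 0 i)) => ->; by [].
Qed.

Lemma hweight_supp (v : V) : hweight v = #|supp v|.
Proof. by []. Qed.

Lemma hweight_le (v : V) : (hweight v <= n)%N.
Proof. by rewrite hweight_supp; apply: leq_trans (max_card _) _; rewrite card_ord. Qed.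

Lemma hweightD (u v : V) : (hweight (u + v) <= hweight u + hweight v)%N.
Proof.
rewrite !hweight_supp; apply: leq_trans (subset_leq_card (suppD u v)) _.
by rewrite cardsU leq_subr.
Qed.

Lemma supp_ind_disj (u : V) (Z : {set 'I_n}) : [disjoint supp u & Z] -> supp (u + ind Z) = supp u :|: Z.
Proof.
move=> dis; apply/setP => i; rewrite !inE !mxE.
case: (boolP (i \in Z)) => iZ /=.
  have : i \notin supp u by rewrite (disjointFl dis iZ).
  by rewrite inE negbK => /eqP ->; rewrite add0r orbT.
by rewrite addr0 orbF.
Qed.

Lemma hweight_ind (u : V) (Z : {set 'I_n}) : [disjoint supp u & Z] ->
  hweight (u + ind Z) = (hweight u + #|Z|)%N.
Proof.
move=> dis; rewrite !hweight_supp supp_ind_disj // cardsU.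
by move: dis; rewrite -setI_eq0 => /eqP ->; rewrite cards0 subn0.
Qed.


Definition coset (D : {vspace V}) x := [set x + c | c in vset D].
Definition W (D : {vspace V}) x := coset_weight (coset D x).

Lemma in_vset (D : {vspace V}) c : (c \in vset D) = (c \in D).
Proof. by rewrite inE. Qed.

Lemma W_le (D : {vspace V}) (x c : V) : c \in D -> (W D x <= hweight (x + c))%N.
Proof.
move=> cD; rewrite /W /coset_weight; apply: bigminn_le.
by apply/imsetP; exists c; rewrite ?in_vset.
Qed.

Lemma W_ex (D : {vspace V}) (x : V) : exists2 c, c \in D & W D x = hweight (x + c).
Proof.
have x0: x \in coset D x by apply/imsetP; exists 0; rewrite ?in_vset ?mem0v ?addr0.
case: (arg_minnP (@hweight n) x0) => j jA jmin.
move/imsetP: (jA) => [c cD ej]; rewrite in_vset in cD.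
exists c => //; apply/eqP; rewrite eqn_leq W_le //=.
rewrite /W /coset_weight; apply: (big_ind (fun y => hweight (x+c) <= y)%N).
- exact: hweight_le.
- by move=> y z H1 H2; rewrite leq_min H1 H2.
- by move=> v vA; rewrite -ej; exact: jmin.
Qed.

Lemma W3 (D : {vspace V}) (g x : V) : W (<[g]> + D)%VS x = minn (W D x) (W D (x + g)).
Proof.
apply/eqP; rewrite eqn_leq leq_min; apply/andP; split; first (apply/andP; split).
- case: (W_ex D x) => c cD ->; apply: W_le; rewrite -(add0r c).
  by apply: memv_add; [exact: mem0v | exact: cD].
- case: (W_ex D (x+g)) => c cD ->; rewrite -addrA; apply: W_le.
  by apply: memv_add; [exact: memv_line | exact: cD].
- case: (W_ex (<[g]> + D)%VS x) => c /memv_addP [y /vlineP [k ->] [c' c'D ->]] ->.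
  case: (F2_cases k) => ->; first by rewrite scale0r add0r geq_min W_le.
  by rewrite scale1r addrA geq_min W_le ?orbT.
Qed.

Lemma W4 (D : {vspace V}) (x y : V) : (W D (x + y) <= W D x + hweight y)%N.
Proof.
case: (W_ex D x) => c cD ->; apply: leq_trans (W_le _ cD) _.
by rewrite addrAC hweightD.
Qed.

Lemma W5 (D : {vspace V}) (S : {set 'I_n}) (v : V) (Z : {set 'I_n}) :
  (forall c, c \in D -> [disjoint supp c & S]) -> [disjoint supp v & S] ->
  Z \subset S -> W D (v + ind Z) = (W D v + #|Z|)%N.
Proof.
move=> DS vS ZS.
have key c : c \in D -> hweight (v + ind Z + c) = (hweight (v + c) + #|Z|)%N.
  move=> cD; rewrite addrAC hweight_ind //; apply: disjointWr ZS _.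
  rewrite disjoints_subset; apply: subset_trans (suppD _ _) _.
  by rewrite subUset -!disjoints_subset vS DS.
apply/eqP; rewrite eqn_leq; apply/andP; split.
  by case: (W_ex D v) => c cD ->; rewrite -key // W_le.
by case: (W_ex D (v + ind Z)) => c cD ->; rewrite key // leq_add2r W_le.
Qed.


Lemma supp_proj (x : V) (S : {set 'I_n}) :
  [disjoint supp (x + ind (supp x :&: S)) & S].
Proof.
rewrite disjoints_subset; apply/subsetP => i; rewrite !inE !mxE.
case iS: (i \in S) => //.
by rewrite !inE iS andbT F2_nat F2_addss eqxx.
Qed.

Lemma sum_dec (R : zmodType) (S : {set 'I_n}) (F : V -> R) :
  \sum_(x : V) F x =
  \sum_(v : V | [disjoint supp v & S]) \sum_(Z : {set 'I_n} | Z \subset S) F (v + ind Z).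
Proof.
rewrite pair_big_dep.
rewrite (reindex_onto (fun p : V * {set 'I_n} => p.1 + ind p.2)
   (fun x => (x + ind (supp x :&: S), supp x :&: S))) /=; last by move=> x _; rewrite addvK.
apply: eq_bigl => -[v Z] /=.
apply/idP/idP.
  move/eqP => [e1 e2]; rewrite -e1 -e2 supp_proj /=; exact: subsetIr.
move=> /andP [vS ZS].
have eZ : supp (v + ind Z) :&: S = Z.
  rewrite supp_ind_disj; last exact: disjointWr ZS vS.
  by rewrite setIUl (disjoint_setI0 vS) set0U; apply/setIidPl.
by rewrite eZ addvK.
Qed.

Lemma sum_subsets (R : zmodType) (S : {set 'I_n}) (h : nat -> R) :
  \sum_(Z : {set 'I_n} | Z \subset S) h #|Z| = \sum_(k < #|S|.+1) h k *+ 'C(#|S|, k).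
Proof.
rewrite (partition_big (fun Z : {set 'I_n} => (inord #|Z| : 'I_#|S|.+1)) xpredT) //=.
apply: eq_bigr => k _.
transitivity (\sum_(Z in [set Z : {set 'I_n} | Z \subset S & #|Z| == k]) h k).
  have P1 (Z : {set 'I_n}) : Z \subset S -> (inord #|Z| == k :> 'I_#|S|.+1) = (#|Z| == k).
    move=> ZS; have lt : (#|Z| < #|S|.+1)%N by rewrite ltnS; exact: subset_leq_card ZS.
    apply/eqP/eqP => [<-|e]; first by rewrite inordK.
    by apply: val_inj; rewrite /= inordK.
  transitivity (\sum_(Z : {set 'I_n} | (Z \subset S) && (inord #|Z| == k :> 'I_#|S|.+1)) h k).
    apply: eq_bigr => Z /andP [ZS /eqP <-]; rewrite inordK //.
    by rewrite ltnS; exact: subset_leq_card ZS.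
  apply: eq_bigl => Z; rewrite inE; case ZS: (Z \subset S) => //=; exact: P1.
by rewrite sumr_const cards_draws.
Qed.

Lemma sum_subsets_pow (R : comPzRingType) (S : {set 'I_n}) (l : R) :
  \sum_(Z : {set 'I_n} | Z \subset S) l ^+ #|Z| = (l + 1) ^+ #|S|.
Proof. by rewrite sum_subsets exprD1n. Qed.


Definition cov (D : {vspace V}) : {set 'I_n} :=
  [set i | [exists c : V, (c \in D) && (c 0 i != 0)]].

Lemma cov_disj (D : {vspace V}) c : c \in D -> [disjoint supp c & ~: cov D].
Proof.
move=> cD; rewrite disjoints_subset setCK; apply/subsetP => i; rewrite !inE => ci.
by apply/existsP; exists c; rewrite cD.
Qed.

Lemma disj_add (S : {set 'I_n}) (u v : V) :
  [disjoint supp u & S] -> [disjoint supp v & S] -> [disjoint supp (u + v) & S].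
Proof.
move=> uS vS; rewrite disjoints_subset; apply: subset_trans (suppD _ _) _.
by rewrite subUset -!disjoints_subset uS vS.
Qed.

Lemma ind_diff (S Z : {set 'I_n}) : Z \subset S -> ind Z + ind S = ind (S :\: Z).
Proof.
move=> ZS; apply/rowP => i; rewrite !mxE !inE.
case iZ: (i \in Z); last by rewrite add0r.
by rewrite (subsetP ZS _ iZ) F2_addss.
Qed.

Lemma eqle (R : numDomainType) (x y : R) : x = y -> x <= y.
Proof. by move->. Qed.

Section Step.
Variable R : realFieldType.
Variables (l B : R) (w : nat).
Hypothesis l0 : 0 <= l.
Hypothesis l1 : l <= 1.
Hypothesis B0 : 0 <= B.
Hypothesis HB : forall s a b, (s <= w)%N -> (a <= b + (w - s))%N -> (b <= a + (w - s))%N ->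
  \sum_(k < s.+1) l ^+ minn (a + k) (b + (s - k)) *+ 'C(s, k) <= B ^+ s * (l ^+ a + l ^+ b).

Definition SW (D : {vspace V}) := \sum_(x : V) l ^+ W D x.

Lemma step (D : {vspace V}) (g : V) : (hweight g <= w)%N ->
  (l + 1) ^+ #|supp g :\: cov D| * SW (<[g]> + D)%VS
    <= 2%:R * B ^+ #|supp g :\: cov D| * SW D.
Proof.
move=> gw.
set S := supp g :\: cov D; set s := #|S|.
have DS c : c \in D -> [disjoint supp c & S].
  move=> cD; apply: disjointWr (cov_disj cD); apply/subsetP => i; rewrite !inE.
  by case/andP.
set a := g + ind S.
have aS : [disjoint supp a & S].
  rewrite disjoints_subset; apply/subsetP => i ia; rewrite inE; apply/negP => iS.
  move: ia; rewrite inE /a !mxE iS; move: iS; rewrite !inE => /andP [_].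
  by case: (F2_cases (g 0 i)) => ->.
have ga : g = a + ind S by rewrite addvK.
have wa : (hweight a + s <= w)%N by rewrite /s -(hweight_ind aS) -ga.
pose al := fun v => W D v.
pose be := fun v => W D (v + a).
have eW (v : V) (Z : {set 'I_n}) : [disjoint supp v & S] -> Z \subset S ->
    W (<[g]> + D)%VS (v + ind Z) = minn (al v + #|Z|) (be v + (s - #|Z|)).
  move=> vS ZS; rewrite W3 (W5 (S:=S)) //; congr minn.
  rewrite ga addrACA (ind_diff ZS) (W5 (S:=S)) //; last exact: subsetDl.
    by rewrite cardsD (setIidPr ZS).
  by apply: disj_add.
have eW0 (v : V) (Z : {set 'I_n}) : [disjoint supp v & S] -> Z \subset S ->
    W D (v + ind Z) = (al v + #|Z|)%N.
  by move=> vS ZS; rewrite (W5 (S:=S)).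
have bnd1 v : (al v <= be v + (w - s))%N.
  apply: leq_trans (_ : be v + hweight a <= _)%N; last by rewrite leq_add2l; lia.
  by rewrite /al /be -{1}(addvK v a) W4.
have bnd2 v : (be v <= al v + (w - s))%N.
  apply: leq_trans (_ : al v + hweight a <= _)%N; last by rewrite leq_add2l; lia.
  by rewrite /al /be W4.
have sw : (s <= w)%N by lia.
have E1 : SW (<[g]> + D)%VS = \sum_(v : V | [disjoint supp v & S])
      \sum_(k < s.+1) l ^+ minn (al v + k) (be v + (s - k)) *+ 'C(s, k).
  rewrite /SW (sum_dec S); apply: eq_bigr => v vS.
  rewrite -(sum_subsets S (fun k => l ^+ minn (al v + k) (be v + (s - k)))).
  by apply: eq_bigr => Z ZS; rewrite eW.
have E2 : SW D = (l + 1) ^+ s * \sum_(v : V | [disjoint supp v & S]) l ^+ al v.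
  rewrite /SW (sum_dec S) mulr_sumr; apply: eq_bigr => v vS.
  rewrite -sum_subsets_pow mulr_suml; apply: eq_bigr => Z ZS.
  by rewrite eW0 // exprD mulrC.
have E3 : \sum_(v : V | [disjoint supp v & S]) l ^+ be v
        = \sum_(v : V | [disjoint supp v & S]) l ^+ al v.
  rewrite (reindex_inj (addIr a)) /=. apply: eq_big => v.
    apply/idP/idP => H. 
      by rewrite -(addvK v a); apply: disj_add.
    by apply: disj_add.
  by move=> _; rewrite /al /be addvK.
have L : 0 <= (l + 1) ^+ s by apply: exprn_ge0; apply: addr_ge0.
have H : \sum_(v : V | [disjoint supp v & S])
      \sum_(k < s.+1) l ^+ minn (al v + k) (be v + (s - k)) *+ 'C(s, k)
   <= 2%:R * B ^+ s * \sum_(v : V | [disjoint supp v & S]) l ^+ al v.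
  apply: le_trans (ler_sum _ (fun v _ => HB sw (bnd1 v) (bnd2 v))) _.
  rewrite -mulr_sumr big_split /= E3; apply: eqle.
  by rewrite -mulrA mulr_natl -mulrnAr mulr2n.
rewrite E1 E2; apply: le_trans (ler_wpM2l L H) _; apply: eqle.
by rewrite mulrCA.
Qed.

End Step.

Lemma card_vset_add (D : {vspace V}) g : g \notin D ->
  #|vset (<[g]> + D)%VS| = (#|vset D| + #|vset D|)%N.
Proof.
move=> gD.
have -> : vset (<[g]> + D)%VS = vset D :|: [set g + c | c in vset D].
  apply/setP => x; rewrite !inE; apply/idP/idP.
    case/memv_addP => y /vlineP [k ->] [c cD ->].
    case: (F2_cases k) => ->; first by rewrite scale0r add0r cD.
    by rewrite scale1r; apply/orP; right; apply/imsetP; exists c; rewrite ?in_vset.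
  case/orP => [xD | /imsetP [c cD ->]].
    by rewrite -(add0r x); apply: memv_add; [exact: mem0v | exact: xD].
  by rewrite in_vset in cD; apply: memv_add (memv_line g) cD.
rewrite cardsU card_imset; last exact: addrI.
suff -> : vset D :&: [set g + c | c in vset D] = set0 by rewrite cards0 subn0.
apply/setP => x; rewrite !inE; apply/negP => /andP [xD /imsetP [c cD ex]].
move: gD; rewrite -(addvK g c) -ex; move/negP; apply; apply: memvD => //.
by rewrite -in_vset.
Qed.

Lemma cov_add (D : {vspace V}) g : cov (<[g]> + D)%VS = cov D :|: supp g.
Proof.
apply/setP => i; rewrite !inE; apply/idP/idP.
  case/existsP => c' /andP [/memv_addP [y /vlineP [k ->] [c cD ->]]].
  rewrite !mxE => H.
  case gi: (g 0 i == 0); last by rewrite orbT.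
  apply/orP; left; apply/existsP; exists c; rewrite cD /=.
  by move: H; rewrite (eqP gi) mulr0 add0r.
case/orP => [/existsP [c /andP [cD ci]] | gi]; apply/existsP.
  by exists c; rewrite ci andbT -(add0r c); apply: memv_add (mem0v _) cD.
by exists g; rewrite gi andbT -{1}(addr0 g); apply: memv_add (memv_line g) (mem0v _).
Qed.

Lemma card_cov_add (D : {vspace V}) g :
  #|cov (<[g]> + D)%VS| = (#|cov D| + #|supp g :\: cov D|)%N.
Proof.
rewrite cov_add.
have -> : cov D :|: supp g = cov D :|: (supp g :\: cov D).
  by apply/setP => i; rewrite !in_setU in_setD; case: (i \in cov D).
rewrite cardsU; suff -> : cov D :&: (supp g :\: cov D) = set0 by rewrite cards0 subn0.
by apply/setP => i; rewrite in_setI in_setD in_set0; case: (i \in cov D).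
Qed.

Lemma W0 (x : V) : W 0%VS x = hweight x.
Proof.
apply/eqP; rewrite eqn_leq; apply/andP; split.
  by have := W_le x (mem0v 0%VS); rewrite addr0.
case: (W_ex 0%VS x) => c c0 ->; move: c0; rewrite memv0 => /eqP ->.
by rewrite addr0.
Qed.

Section Main.
Variable R : realFieldType.
Variables (l B : R) (w : nat).
Hypothesis l0 : 0 <= l.
Hypothesis l1 : l <= 1.
Hypothesis B0 : 0 <= B.
Hypothesis HB : forall s a b, (s <= w)%N -> (a <= b + (w - s))%N -> (b <= a + (w - s))%N ->
  \sum_(k < s.+1) l ^+ minn (a + k) (b + (s - k)) *+ 'C(s, k) <= B ^+ s * (l ^+ a + l ^+ b).

Lemma SW0 : SW l 0%VS = (l + 1) ^+ n.
Proof.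
rewrite /SW (sum_dec [set: 'I_n]).
rewrite (big_pred1 0); last first.
  move=> v; rewrite /= disjoints_subset setCT subset0; apply/eqP/eqP => [e|->].
    apply/rowP => i; rewrite mxE; apply/eqP; apply: contraT => vi.
    have : i \in supp v by rewrite inE.
    by rewrite e inE.
  by apply/setP => i; rewrite !inE mxE eqxx.
transitivity ((l + 1) ^+ #|[set: 'I_n]|); last by rewrite cardsT card_ord.
rewrite -sum_subsets_pow; apply: eq_bigr => Z _.
have e : supp (ind Z) = Z by apply/setP => i; rewrite !inE mxE; case: (i \in Z).
by rewrite add0r W0 hweight_supp e.
Qed.

Lemma invariant (Sg : seq V) : all (fun v => hweight v <= w)%N Sg ->
  SW l <<Sg>>%VS <= #|vset <<Sg>>%VS|%:R * (l + 1) ^+ (n - #|cov <<Sg>>%VS|)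
                      * B ^+ #|cov <<Sg>>%VS|.
Proof.
elim: Sg => [_|g Sg IH /= /andP [gw Hall]].
  rewrite span_nil SW0.
  have -> : cov 0%VS = set0.
    apply/setP => i; rewrite inE in_set0; case: existsP => // -[c /andP [c0 ci]].
    by move: c0 ci; rewrite memv0 => /eqP ->; rewrite mxE eqxx.
  have -> : vset (0%VS : {vspace V}) = [set 0 : V].
    by apply/setP => x; rewrite in_vset memv0 inE.
  by rewrite cards1 cards0 subn0 expr0 mulr1 mul1r.
have IH' := IH Hall.
rewrite span_cons.
case: (boolP (g \in <<Sg>>%VS)) => gD.
  by move: (gD); rewrite memvE => /addv_idPr ->.
rewrite card_vset_add // card_cov_add.
move: IH'.
set D := <<Sg>>%VS.
set s := #|supp g :\: cov D|; set c := #|cov D|; set d := #|vset D|.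
move=> IH'.
have cs : (c + s <= n)%N.
  rewrite /c /s -card_cov_add; apply: leq_trans (max_card _) _; by rewrite card_ord.
have St := step l0 l1 B0 HB D gw; rewrite -/s in St.
have L : 0 < (l + 1) ^+ s by apply: exprn_gt0; apply: ltr_wpDl.
have E : (n - c)%N = (s + (n - (c + s)))%N by lia.
rewrite -(ler_pM2l L); apply: le_trans St _.
have H2 : 0 <= 2%:R * B ^+ s by apply: mulr_ge0 => //; apply: exprn_ge0.
apply: le_trans (ler_wpM2l H2 IH') _; apply: eqle.
rewrite E !exprD natrD.
move: ((l + 1) ^+ s) ((l + 1) ^+ (n - (c + s))) (B ^+ c) (B ^+ s) (d%:R : R) => x1 x2 x3 x4 x5.
rewrite mulr2n mulrDl mul1r; ring.
Qed.

End Main.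
End Vec.

Lemma sum_rev (R : zmodType) s (F : nat -> R) :
  \sum_(k < s.+1) F k *+ 'C(s, k) = \sum_(k < s.+1) F (s - k)%N *+ 'C(s, k).
Proof.
rewrite (reindex_inj rev_ord_inj) /=; apply: eq_bigr => k _.
rewrite subSS bin_sub //; by rewrite -ltnS.
Qed.


Section Num.
Variable R : realFieldType.
Variable l : R.
Hypothesis l0 : 0 <= l.
Hypothesis l1 : l <= 1.

Lemma lexp m k : (m <= k)%N -> l ^+ k <= l ^+ m.
Proof. by move=> h; apply: ler_wiXn2l. Qed.

Lemma pair_ineq w s a b k : (s <= w)%N -> (a <= b + w)%N -> (b <= a + w)%N -> (k <= s)%N ->
  (1 + l ^+ w) * (l ^+ minn (a + k)%N (b + (s - k))%N + l ^+ minn (a + (s - k))%N (b + k)%N)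
  <= (l ^+ a + l ^+ b) * (l ^+ k + l ^+ (s - k)).
Proof.
move=> sw ab ba ks.
have E : (l ^+ a + l ^+ b) * (l ^+ k + l ^+ (s - k)) =
   l ^+ (a + k) + l ^+ (a + (s - k)) + l ^+ (b + k) + l ^+ (b + (s - k)).
  by rewrite !exprD; ring.
rewrite E mulrDl mul1r mulrDr -!exprD.
case: (leqP (a + k)%N (b + (s - k))%N) => h1; case: (leqP (a + (s - k))%N (b + k)%N) => h2.
- have := lexp (_ : b + k <= w + (a + k))%N; have := lexp (_ : b + (s - k) <= w + (a + (s - k)))%N.
  move=> /(_ ltac:(lia)) H1 /(_ ltac:(lia)) H2; lra.
- have := lexp (_ : a + (s - k) <= w + (a + k))%N; have := lexp (_ : b + (s - k) <= w + (b + k))%N.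
  move=> /(_ ltac:(lia)) H1 /(_ ltac:(lia)) H2; lra.
- have := lexp (_ : b + k <= w + (b + (s - k)))%N; have := lexp (_ : a + k <= w + (a + (s - k)))%N.
  move=> /(_ ltac:(lia)) H1 /(_ ltac:(lia)) H2; lra.
- have := lexp (_ : a + k <= w + (b + k))%N; have := lexp (_ : a + (s - k) <= w + (b + (s - k)))%N.
  move=> /(_ ltac:(lia)) H1 /(_ ltac:(lia)) H2; lra.
Qed.


Lemma gen_bound w s a b : (s <= w)%N -> (a <= b + w)%N -> (b <= a + w)%N ->
  (1 + l ^+ w) * \sum_(k < s.+1) l ^+ minn (a + k)%N (b + (s - k))%N *+ 'C(s, k)
  <= (l + 1) ^+ s * (l ^+ a + l ^+ b).
Proof.
move=> sw ab ba.
set X := \sum_(k < s.+1) _.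
have e1 : X = \sum_(k < s.+1) l ^+ minn (a + (s - k))%N (b + k)%N *+ 'C(s, k).
  rewrite /X (@sum_rev _ s (fun k => l ^+ minn (a + k)%N (b + (s - k))%N)); apply: eq_bigr => k _; rewrite subKn //; by rewrite -ltnS.
have e2 : \sum_(k < s.+1) l ^+ (s - k) *+ 'C(s, k) = (l + 1) ^+ s.
  by rewrite -(@sum_rev _ s (fun k => l ^+ k)) exprD1n.
have H : (1 + l ^+ w) * (X + X) <= (l ^+ a + l ^+ b) * ((l + 1) ^+ s + (l + 1) ^+ s).
  rewrite {2}e1 -{2}e2 {1}exprD1n -!big_split !mulr_sumr; apply: ler_sum => k _.
  rewrite /= -!mulrnDl !mulrnAr; apply: ler_wMn2r; apply: pair_ineq => //.
  by rewrite -ltnS.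
move: H; set Y := (1 + l ^+ w) * X; set Z := (l + 1) ^+ s * (l ^+ a + l ^+ b).
have -> : (1 + l ^+ w) * (X + X) = Y + Y by rewrite /Y mulrDr.
have -> : (l ^+ a + l ^+ b) * ((l + 1) ^+ s + (l + 1) ^+ s) = Z + Z by rewrite /Z mulrDr mulrC.
lra.
Qed.


Lemma HB_of_Hd (B : R) w :
  (forall s d, (s + d <= w)%N ->
     \sum_(k < s.+1) l ^+ minn k (d + (s - k))%N *+ 'C(s, k) <= B ^+ s * (1 + l ^+ d)) ->
  forall s a b, (s <= w)%N -> (a <= b + (w - s))%N -> (b <= a + (w - s))%N ->
  \sum_(k < s.+1) l ^+ minn (a + k)%N (b + (s - k))%N *+ 'C(s, k) <= B ^+ s * (l ^+ a + l ^+ b).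
Proof.
move=> Hd s a b sw.
wlog ab : a b / (a <= b)%N.
  move=> Hw h1 h2; case: (leqP a b) => ab; first exact: Hw.
  rewrite (@sum_rev _ s (fun k => l ^+ minn (a + k)%N (b + (s - k))%N)) addrC.
  apply: le_trans (Hw b a (ltnW ab) h2 h1); apply: eqle; apply: eq_bigr => k _.
  rewrite subKn; [by rewrite minnC | by rewrite -ltnS].
move=> h1 h2.
have eb : b = (a + (b - a))%N by rewrite subnKC.
have X : \sum_(k < s.+1) l ^+ minn (a + k)%N (b + (s - k))%N *+ 'C(s, k) =
   l ^+ a * \sum_(k < s.+1) l ^+ minn k ((b - a) + (s - k))%N *+ 'C(s, k).
  rewrite mulr_sumr; apply: eq_bigr => k _.
  by rewrite mulrnAr -exprD {1}eb -addnA -addn_minr.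
rewrite X {2}eb exprD.
have la : 0 <= l ^+ a by apply: exprn_ge0.
apply: le_trans (ler_wpM2l la (Hd s (b - a)%N _)) _; first by lia.
by apply: eqle; ring.
Qed.


Lemma root_bound (m s : nat) (T Y B C : R) : (0 < m)%N -> 0 <= T -> 0 <= Y -> 0 <= B ->
  B ^+ m = C -> T ^+ m <= C ^+ s * Y ^+ m -> T <= B ^+ s * Y.
Proof.
move=> m0 T0 Y0 B0 BC H.
have z0 : 0 <= B ^+ s * Y by apply: mulr_ge0 => //; apply: exprn_ge0.
rewrite -(ler_pXn2r m0) ?nnegrE // exprMn -exprM mulnC exprM BC //.
Qed.

Lemma atoms : (forall k, (k <= 20)%N -> 0 <= l ^+ k) /\ (forall k, l ^+ k.+1 <= l ^+ k).
Proof.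
split=> [k _|k]; first exact: exprn_ge0.
by apply: lexp.
Qed.

Lemma Hd3 (B : R) : 0 <= B -> B ^+ 3 = 1 + 3%:R * l ->
  forall s d, (s + d <= 3)%N ->
     \sum_(k < s.+1) l ^+ minn k (d + (s - k))%N *+ 'C(s, k) <= B ^+ s * (1 + l ^+ d).
Proof.
move=> B0 B3 s d.
have C32 : 'C(3,2) = 3%N by [].
have [A1 A2] := atoms.
have := A1 1%N isT; have := A1 2%N isT; have := A1 3%N isT; have := A1 4%N isT;
have := A1 5%N isT; have := A1 6%N isT; have := A1 7%N isT; have := A1 8%N isT;
have := A1 9%N isT; have := A2 1%N; have := A2 2%N.
move=> h1 h2 h3 h4 h5 h6 h7 h8 h9 h10 h11.
case: s => [|[|[|[|s]]]]; case: d => [|[|[|[|d]]]] //= sd;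
  rewrite !big_ord_recr big_ord0 /= /minn /= ?bin0 ?binn ?bin1 /addn /subn /= ?C32;
  (apply: (root_bound (m := 3)) B3 _ => //; [lra | lra | lra]).
Qed.


Lemma Hd4 (B : R) : 0 <= B -> B ^+ 4 = 1 + 4%:R * l + 6%:R * l ^+ 2 ->
  forall s d, (s + d <= 4)%N ->
     \sum_(k < s.+1) l ^+ minn k (d + (s - k))%N *+ 'C(s, k) <= B ^+ s * (1 + l ^+ d).
Proof.
move=> B0 B4 s d.
have C32 : 'C(3,2) = 3%N by [].
have C42 : 'C(4,2) = 6%N by [].
have C43 : 'C(4,3) = 4%N by [].
have [A1 A2] := atoms.
have := A1 1%N isT; have := A1 2%N isT; have := A1 3%N isT; have := A1 4%N isT;
have := A1 5%N isT; have := A1 6%N isT; have := A1 7%N isT; have := A1 8%N isT;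
have := A1 9%N isT; have := A1 10%N isT; have := A1 11%N isT; have := A1 12%N isT;
have := A1 13%N isT; have := A1 14%N isT; have := A1 15%N isT; have := A1 16%N isT.
move=> h1 h2 h3 h4 h5 h6 h7 h8 h9 h10 h11 h12 h13 h14 h15 h16.
case: s => [|[|[|[|[|s]]]]]; case: d => [|[|[|[|[|d]]]]] //= sd;
  rewrite !big_ord_recr big_ord0 /= /minn /= ?bin0 ?binn ?bin1 /addn /subn /= ?C32 ?C42 ?C43;
  (apply: (root_bound (m := 4)) B4 _ => //; [lra | lra | lra]).
Qed.

End Num.

Set Implicit Arguments.
Section Fin.
Variable n : nat.
Notation V := 'rV['F_2]_n.

Lemma coset_mem (C : {vspace V}) (x : V) : x \in coset C x.
Proof. by apply/imsetP; exists 0; rewrite ?in_vset ?mem0v ?addr0. Qed.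

Lemma coset_eq (C : {vspace V}) (x y : V) : (coset C x == coset C y) = (x \in coset C y).
Proof.
apply/eqP/idP => [<-|]; first exact: coset_mem.
case/imsetP => c cC ->; rewrite in_vset in cC.
apply/setP => z; apply/imsetP/imsetP => -[c' c'C ->]; rewrite in_vset in c'C.
  by exists (c + c'); rewrite ?in_vset ?memvD // addrA.
exists (c + c'); rewrite ?in_vset ?memvD //.
by rewrite addrA -(addrA y) addvv addr0.
Qed.

Lemma card_coset (C : {vspace V}) (y : V) : #|coset C y| = #|vset C|.
Proof. by rewrite card_imset //; exact: addrI. Qed.

Lemma QC_SW (R : realType) (C : {vspace V}) (l : R) :
  QC C l = (#|vset C|%:R)^-1 * SW l C.
Proof.
rewrite /QC /SW (partition_big (coset C) (mem (cosets C))) /=; last first.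
  by move=> x _; apply/imsetP; exists x.
rewrite mulr_sumr; apply: eq_bigr => A /imsetP [y _ ->].
transitivity ((#|vset C|%:R)^-1 * \sum_(x in coset C y) l ^+ coset_weight (coset C y)).
  rewrite sumr_const card_coset -[l ^+ _ *+ _]mulr_natl mulrA mulVf ?mul1r //.
  by rewrite pnatr_eq0 -lt0n; apply/card_gt0P; exists 0; rewrite in_vset mem0v.
congr (_ * _); apply: eq_big => x; first by rewrite coset_eq.
move=> xy; have e : coset C x = coset C y by apply/eqP; rewrite coset_eq.
by rewrite /W e.
Qed.

End Fin.

Lemma root_pow (R : realType) (x : R) (w m : nat) : 0 <= x ->
  (x `^ (w%:R^-1)) ^+ m = x `^ (m%:R / w%:R).
Proof. by move=> x0; rewrite -powR_mulrn ?powR_ge0 // -powRrM mulrC. Qed.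

Lemma root_powW (R : realType) (x : R) (w : nat) : 0 <= x -> (0 < w)%N ->
  (x `^ (w%:R^-1)) ^+ w = x.
Proof.
move=> x0 w0; rewrite root_pow // divff ?powRr1 //.
by rewrite pnatr_eq0 -lt0n.
Qed.


Lemma cov_full n (C : {vspace 'rV['F_2]_n}) :
  (forall i : 'I_n, exists2 c : 'rV['F_2]_n, c \in C & c 0 i != 0) -> cov C = setT.
Proof.
move=> H; apply/setP => i; rewrite inE in_setT.
by case: (H i) => c cC ci; apply/existsP; exists c; rewrite cC.
Qed.

Lemma key_bound (R : realType) (w n : nat) (Sg : seq 'rV['F_2]_n) (l B : R) :
  0 <= l -> l <= 1 -> 0 <= B ->
  (forall s a b, (s <= w)%N -> (a <= b + (w - s))%N -> (b <= a + (w - s))%N ->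
    \sum_(k < s.+1) l ^+ minn (a + k)%N (b + (s - k))%N *+ 'C(s, k) <= B ^+ s * (l ^+ a + l ^+ b)) ->
  all (fun v => (hweight v <= w)%N) Sg ->
  (forall i : 'I_n, exists2 c : 'rV['F_2]_n, c \in <<Sg>>%VS & c 0 i != 0) ->
  QC <<Sg>>%VS l <= B ^+ n.
Proof.
move=> l0 l1 B0 HB Hall Hcov.
have := invariant l0 l1 B0 HB Hall.
rewrite (cov_full Hcov) cardsT card_ord subnn expr0 mulr1 QC_SW => H.
have c0 : 0 < (#|vset <<Sg>>%VS|)%:R :> R.
  by rewrite ltr0n; apply/card_gt0P; exists 0; rewrite in_vset mem0v.
by rewrite ler_pdivrMl.
Qed.

Lemma gen_root (R : realType) (l : R) (w s : nat) : 0 <= l -> l <= 1 -> (0 < w)%N -> (s <= w)%N ->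
  (l + 1) ^+ s <= (((1 + l) ^+ w / (1 + l ^+ w)) `^ (w%:R^-1)) ^+ s * (1 + l ^+ w).
Proof.
move=> l0 l1 w0 sw.
have q0 : 0 < 1 + l ^+ w by apply: ltr_pwDl => //; apply: exprn_ge0.
have p0 : 0 <= 1 + l by apply: addr_ge0.
have b0 : 0 <= (1 + l) ^+ w / (1 + l ^+ w) by apply: divr_ge0; [apply: exprn_ge0 | apply: ltW].
apply: (root_bound (m := w) (C := (1 + l) ^+ w / (1 + l ^+ w))) => //.
- by apply: exprn_ge0; apply: addr_ge0.
- exact: ltW.
- exact: powR_ge0.
- exact: root_powW.
have E : (1 + l ^+ w) ^+ w = (1 + l ^+ w) ^+ s * (1 + l ^+ w) ^+ (w - s).
  by rewrite -exprD subnKC.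
rewrite E (addrC l 1) expr_div_n -!exprM (mulnC w s).
have Q1' : 1 <= 1 + l ^+ w by rewrite lerDl exprn_ge0.
move: ((1 + l) ^+ (s * w)) (1 + l ^+ w) q0 Q1' (exprn_ge0 (s * w) p0) => P Q Q0 Q1' P0.
have Qs : Q ^+ s != 0 by apply: expf_neq0; rewrite gt_eqF.
have Q1 : 1 <= Q ^+ (w - s).
  exact: exprn_ege1.
have -> : P / Q ^+ s * (Q ^+ s * Q ^+ (w - s)) = P * Q ^+ (w - s).
  by rewrite mulrA divfK.
exact: ler_peMr.
Qed.

Unset Implicit Arguments.
Theorem theorem3 (R : realType) (w n : nat) (C : {vspace 'rV['F_2]_n}) :
  (1 <= w)%N -> (1 <= n)%N ->
  (exists S : seq 'rV['F_2]_n,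
      all (fun v => (hweight v <= w)%N) S /\ C = <<S>>%VS) ->
  (forall i : 'I_n, exists2 c : 'rV['F_2]_n, c \in C & c 0 i != 0) ->
  forall l : R, 0 <= l <= 1 ->
    [/\ QC C l <= (((1 + l) ^+ w) / (1 + l ^+ w)) `^ (n%:R / w%:R),
        (w = 3%N -> QC C l <= (1 + 3 * l) `^ (n%:R / 3)) &
        (w = 4%N -> QC C l <= (1 + 4 * l + 6 * l ^+ 2) `^ (n%:R / 4))].
Proof.
move=> w1 n1 [Sg [Hall eC]] Hcov l /andP [l0 l1]; subst C.
have q0 : 0 < 1 + l ^+ w by apply: ltr_pwDl => //; apply: exprn_ge0.
split.
- have b0 : 0 <= (1 + l) ^+ w / (1 + l ^+ w).
    by apply: divr_ge0; [apply: exprn_ge0; apply: addr_ge0 | apply: ltW].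
  rewrite -root_pow //; apply: (key_bound (w := w)) => //; first exact: powR_ge0.
  move=> s a b sw h1 h2.
  have K := gen_root l0 l1 w1 sw.
  have G := gen_bound l0 l1 sw (_ : (a <= b + w)%N) (_ : (b <= a + w)%N).
  rewrite -(ler_pM2l q0); apply: le_trans (G _ _) _; try lia.
  have X0 : 0 <= l ^+ a + l ^+ b by apply: addr_ge0; apply: exprn_ge0.
  apply: le_trans (ler_wpM2r X0 K) _; apply: eqle.
  by rewrite mulrAC mulrC.
- move=> w3; move: Hall w1 q0; rewrite w3 => Hall w1 q0.
  have b0 : 0 <= 1 + 3 * l by apply: addr_ge0 => //; apply: mulr_ge0.
  rewrite -[(3 : R)]/(3%:R) -root_pow //; apply: (key_bound (w := 3%N)) => //; first exact: powR_ge0.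
  apply: HB_of_Hd => //; apply: Hd3 => //; first exact: powR_ge0.
  by rewrite root_powW.
- move=> w4; move: Hall w1 q0; rewrite w4 => Hall w1 q0.
  have b0 : 0 <= 1 + 4 * l + 6 * l ^+ 2.
    by apply: addr_ge0; [apply: addr_ge0 => //; apply: mulr_ge0 | apply: mulr_ge0 => //; apply: exprn_ge0].
  rewrite -[(4 : R)]/(4%:R) -root_pow //; apply: (key_bound (w := 4%N)) => //; first exact: powR_ge0.
  apply: HB_of_Hd => //; apply: Hd4 => //; first exact: powR_ge0.
  by rewrite root_powW.
Qed.
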